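(* Let $(\Omega,\mathcal F)$ be a measurable space with $\Sigma\neq\emptyset$ and $v_0:\mathcal F\to[0,\infty)$ a non-decreasing continuous set function with $v_0(\emptyset)=0$. Suppose $v_n:\mathcal F\to[0,\infty)$, $n=0,1,2,\dots$, is a sequence of continuous set functions satisfying $v_{n+1}(A)=\sup_{\mathcal I\in\Sigma}\mu_{v_n,\mathcal I}(A)$ for all $A\in\mathcal F$ and $n\ge0$. Then for each $A\in\mathcal F$ the sequence $v_n(A)$ is non-decreasing and bounded above by $v_0(\Omega)$, hence converges; and the limit $v(A)=\lim_n v_n(A)$ is non-decreasing, submodular, satisfies $v(\emptyset)=0$, $v(\Omega)=v_0(\Omega)$, and $\lim_n v(A_n)=v(\bigcup_n A_n)$ for every sequence $A_1\subset A_2\subset\cdots$ in $\mathcal F$.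
   Context: $\Sigma$ denotes the set of all classes $\mathcal I\subset\mathcal F$ that are chains (totally ordered by inclusion), contain $\emptyset$ and $\Omega$, and generate $\mathcal F$ as a $\sigma$-algebra. $v$ is non-decreasing if $v(A)\le v(B)$ for $A\subset B$; submodular if $v(A)+v(B)\ge v(A\cup B)+v(A\cap B)$. For $\mathcal I\in\Sigma$ let $\mathcal J$ be the algebra generated by $\mathcal I$, whose elements are the sets $\bigcup_{i=1}^n (C_i\cap D_i^c)$ with $C_1\supset D_1\supset\cdots\supset C_n\supset D_n$ in $\mathcal I$; for non-decreasing $v$ define $\mu_{v,\mathcal I}(\bigcup_{i=1}^n (C_i\cap D_i^c))=\sum_{i=1}^n(v(C_i)-v(D_i))$. A set function $v$ is continuous if it is non-decreasing and, for every $\mathcal I\in\Sigma$, $\mu_{v,\mathcal I}$ is $\sigma$-additive on $\mathcal J$; then $\mu_{v,\mathcal I}$ extends uniquely to a measure on $\mathcal F$, also denoted $\mu_{v,\mathcal I}$. *)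

(* Defs.v *)
From HB Require Import structures.
From mathcomp Require Import all_boot all_order all_algebra.
From mathcomp Require Import all_classical all_reals all_analysis.
Set Implicit Arguments. Unset Strict Implicit. Unset Printing Implicit Defensive.
Import Order.TTheory GRing.Theory Num.Theory.
Import numFieldNormedType.Exports.
Local Open Scope classical_set_scope.
Local Open Scope ring_scope.

Section Defs.
Context {d : measure_display} {T : measurableType d} {R : realType}.

Definition InSigma (I : set (set T)) : Prop :=
  I `<=` measurable /\
  (forall A B, I A -> I B -> A `<=` B \/ B `<=` A) /\
  I set0 /\ I setT /\
  <<s I >> = measurable.

Fixpoint chain_rep (I : set (set T)) (s : seq (set T * set T)) : Prop :=
  match s with
  | [::] => True
  | (C, D) :: s' =>
      [/\ I C, I D, D `<=` C,
        (match s' with [::] => True | (C', _) :: _ => C' `<=` D end)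
        & chain_rep I s']
  end.

(* the element  \bigcup_i (C_i \cap D_i^c)  of the algebra J *)
Definition rep_set (s : seq (set T * set T)) : set T :=
  foldr (fun p A => (p.1 `\` p.2) `|` A) set0 s.

(* mu_{v,I} of that element: \sum_i (v C_i - v D_i) *)
Definition rep_val (v : set T -> R) (s : seq (set T * set T)) : R :=
  \sum_(p <- s) (v p.1 - v p.2).

Definition nondecreasing_sf (v : set T -> R) : Prop :=
  forall A B, measurable A -> measurable B -> A `<=` B -> v A <= v B.

(* mu_{v,I} is sigma-additive on J (stated on representations; this also
   contains the well-definedness of mu_{v,I}) *)
Definition sigma_additive_on_J (v : set T -> R) (I : set (set T)) : Prop :=
  forall (r : nat -> seq (set T * set T)) (s : seq (set T * set T)),
    (forall k, chain_rep I (r k)) -> chain_rep I s ->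
    trivIset setT (fun k => rep_set (r k)) ->
    \bigcup_k rep_set (r k) = rep_set s ->
    (fun n => \sum_(0 <= k < n) rep_val v (r k)) @ \oo --> rep_val v s.

Definition continuous_sf (v : set T -> R) : Prop :=
  nondecreasing_sf v /\ forall I, InSigma I -> sigma_additive_on_J v I.

(* m is the (unique, for continuous v) measure on F extending mu_{v,I} *)
Definition is_mu_ext (v : set T -> R) (I : set (set T))
    (m : {measure set T -> \bar R}) : Prop :=
  forall s, chain_rep I s -> m (rep_set s) = (rep_val v s)%:E.

Definition sup_mu (v : set T -> R) (A : set T) : \bar R :=
  ereal_sup [set x | exists I, exists m : {measure set T -> \bar R},
                       [/\ InSigma I, is_mu_ext v I m & x = m A]].

Definition submodular_sf (v : set T -> R) : Prop :=
  forall A B, measurable A -> measurable B ->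
    v A + v B >= v (A `|` B) + v (A `&` B).

End Defs.

(* Main.v *)
Require Import Defs.
From HB Require Import structures.
From mathcomp Require Import all_boot all_order all_algebra.
From mathcomp Require Import all_classical all_reals all_analysis.
Import Order.TTheory GRing.Theory Num.Theory.
Import numFieldNormedType.Exports.
Local Open Scope classical_set_scope.
Local Open Scope ring_scope.

Set Implicit Arguments. Unset Strict Implicit. Unset Printing Implicit Defensive.

Definition is_chain {T} (I : set (set T)) :=
  forall A B, I A -> I B -> A `<=` B \/ B `<=` A.

Lemma chainU T (I : set (set T)) A B : is_chain I -> I A -> I B -> I (A `|` B).
Proof. by move=> h IA IB; case: (h A B IA IB) => s; [rewrite setUidr|rewrite setUidl]. Qed.
Lemma chainI T (I : set (set T)) A B : is_chain I -> I A -> I B -> I (A `&` B).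
Proof. by move=> h IA IB; case: (h A B IA IB) => s; [rewrite setIidl|rewrite setIidr]. Qed.

Definition CT d (T : measurableType d) (I : set (set T)) : Type := T.
HB.instance Definition _ d (T : measurableType d) I := Pointed.on (@CT d T I).

Definition J0 T (I : set (set T)) : set (set T) :=
  [set X | X = set0 \/ exists C D, [/\ is_chain I, I C, I D & X = C `\` D]].

Ltac setext := apply/funext => ?; apply/propext; rewrite /setD /setI /setU /setC /=; tauto.

Lemma J0_0 T (I : set (set T)) : J0 I set0.
Proof. by left. Qed.

Lemma J0_I T (I : set (set T)) : setI_closed (J0 I).
Proof.
move=> A B [->|[C1 [D1 [ch IC1 ID1 ->]]]]; first by rewrite set0I; left.
move=> [->|[C2 [D2 [_ IC2 ID2 ->]]]]; first by rewrite setI0; left.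
right; exists (C1 `&` C2), (D1 `|` D2); split => //.
- exact: chainI.
- exact: chainU.
- setext.
Qed.

Lemma J0_D T (I : set (set T)) : semi_setD_closed (J0 I).
Proof.
move=> A B [->|[C1 [D1 [ch IC1 ID1 ->]]]].
  exists set0; split; [exact: finite_set0|by []|by rewrite set0D bigcup_set0|by move=> ? ? []].
move=> [->|[C2 [D2 [_ IC2 ID2 ->]]]].
  exists [set C1 `\` D1]; split.
  - exact: finite_set1.
  - by move=> X ->; right; exists C1, D1.
  - by rewrite setD0 bigcup_set1.
  - by move=> X Y -> ->.
set X1 := C1 `\` (D1 `|` C2).
set X2 := (C1 `&` (C2 `&` D2)) `\` D1.
exists ([set X1] `|` [set X2]); split.
- by rewrite finite_setU; split; exact: finite_set1.
- move=> X [->|->]; right.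
  + by exists C1, (D1 `|` C2); split => //; exact: chainU.
  + by exists (C1 `&` (C2 `&` D2)), D1; split => //; apply: chainI => //; exact: chainI.
- rewrite bigcup_setU !bigcup_set1 /X1 /X2; apply/funext => x; apply/propext.
  have := pselect (C2 x); have := pselect (D2 x); have := pselect (D1 x).
  rewrite /setD /setI /setU /setC /=; tauto.
- move=> X Y [->|->] [->|->] //; move=> [x []]; rewrite /X1 /X2 /setD /setI /setU /=; tauto.
Qed.

HB.instance Definition _ d (T : measurableType d) I :=
  @isSemiRingOfSets.Build d (@CT d T I) (J0 I) (J0_0 I) (@J0_I T I) (@J0_D T I).
Section reps.
Context {d : measure_display} {T : measurableType d} {R : realType}.
Implicit Types (I : set (set T)) (v : set T -> R) (s : seq (set T * set T)).

Lemma rep_set_cons C D s : rep_set ((C, D) :: s) = (C `\` D) `|` rep_set s.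
Proof. by []. Qed.

Lemma rep_val_cons v C D s : rep_val v ((C, D) :: s) = (v C - v D) + rep_val v s.
Proof. by rewrite /rep_val big_cons. Qed.

Lemma rep_val_nil v : rep_val v [::] = 0.
Proof. by rewrite /rep_val big_nil. Qed.

Lemma rep_set_subD I C D s : chain_rep I ((C, D) :: s) -> rep_set s `<=` D.
Proof.
elim: s C D => [|[C' D'] s IH] C D; first by move=> *.
move=> [_ _ _ C'D [IC' ID' D'C' h hs]].
rewrite rep_set_cons subUset; split.
  exact: (subset_trans (@subDsetl _ C' D') C'D).
apply: (subset_trans _ C'D); apply: (subset_trans _ D'C'); apply: (IH C' D').
by rewrite /=; split.
Qed.

Lemma rep_meas I s : I `<=` measurable -> chain_rep I s -> measurable (rep_set s).
Proof.
move=> Im; elim: s => [|[C D] s IH]; first by move=> _; exact: measurable0.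
move=> [IC ID _ _ hs]; rewrite rep_set_cons; apply: measurableU; last exact: IH.
by apply: measurableD; exact: Im.
Qed.

Lemma rep_val_ge0 I v s : nondecreasing_sf v -> I `<=` measurable ->
  chain_rep I s -> 0 <= rep_val v s.
Proof.
move=> nd Im; elim: s => [|[C D] s IH]; first by rewrite rep_val_nil.
move=> [IC ID DC _ hs]; rewrite rep_val_cons; apply: addr_ge0; last exact: IH.
by rewrite subr_ge0; apply: nd => //; exact: Im.
Qed.

Lemma rep_unique I v s s' : continuous_sf v -> InSigma I ->
  chain_rep I s -> chain_rep I s' -> rep_set s = rep_set s' ->
  rep_val v s = rep_val v s'.
Proof.
move=> [_ cv] HI hs hs' ss'.
pose r := fun k : nat => if k is 0%N then s else [::].
have hr : forall k, chain_rep I (r k) by case.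
have tr : trivIset setT (fun k => rep_set (r k)).
  by move=> [|i] [|j] _ _ // [x [? ?]].
have bu : \bigcup_k rep_set (r k) = rep_set s'.
  rewrite -ss'; apply/seteqP; split => x.
    by move=> [[|k] _ hk].
  by move=> hx; exists 0%N.
have H := cv I HI r s' hr hs' tr bu.
have H2 : (fun n => \sum_(0 <= k < n) rep_val v (r k)) @ \oo --> rep_val v s.
  apply: cvg_near_cst; exists 1%N => // [[|n]] // _.
  rewrite big_nat_recl // big1 ?addr0 // => k _.
  exact: rep_val_nil.
exact: (cvg_unique _ H2 H).
Qed.

End reps.

Definition mu0' d (T : measurableType d) (R : realType) (v : set T -> R)
    (I : set (set T)) (X : set T) : \bar R :=
  if pselect (exists s, chain_rep I s /\ rep_set s = X) is left h
  then (rep_val v (sval (cid h)))%:E else 0%E.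

Definition mu0 d (T : measurableType d) (R : realType) (v : set T -> R)
    (I : set (set T)) (X : set T) : \bar R :=
  if pselect (continuous_sf v /\ InSigma I) is left _ then mu0' v I X else 0%E.

Section mu0.
Context {d : measure_display} {T : measurableType d} {R : realType}.
Implicit Types (I : set (set T)) (v : set T -> R) (s : seq (set T * set T)).

Lemma mu0'E v I s : continuous_sf v -> InSigma I -> chain_rep I s ->
  mu0' v I (rep_set s) = (rep_val v s)%:E.
Proof.
move=> cv HI hs; rewrite /mu0'; case: pselect => [h|]; last first.
  by move=> nh; exfalso; apply: nh; exists s.
case: (cid h) => s0 [hs0 e] /=; congr (_%:E).
exact: (rep_unique cv HI hs0 hs e).
Qed.

Lemma mu0E v I s : continuous_sf v -> InSigma I -> chain_rep I s ->
  mu0 v I (rep_set s) = (rep_val v s)%:E.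
Proof.
move=> cv HI hs; rewrite /mu0; case: pselect => [_|[]//]; exact: mu0'E.
Qed.

Lemma mu0_0 v I : mu0 v I set0 = 0%E.
Proof.
rewrite /mu0; case: pselect => // -[cv HI].
by rewrite (mu0'E (s := [::])) // rep_val_nil.
Qed.

Lemma mu0_ge0 v I X : (0 <= mu0 v I X)%E.
Proof.
rewrite /mu0; case: pselect => // -[cv HI]; rewrite /mu0'.
case: pselect => // h; case: (cid h) => s0 [hs0 e] /=.
by rewrite lee_fin; apply: (rep_val_ge0 (I := I) cv.1 HI.1 hs0).
Qed.

Lemma J0_rep I X : InSigma I -> J0 I X -> exists s, chain_rep I s /\ rep_set s = X.
Proof.
move=> HI [->|[C [D [ch IC ID ->]]]]; first by exists [::].
exists [:: (C, C `&` D)]; split.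
  by split => //; exact: (chainI ch IC ID).
rewrite rep_set_cons /= setU0; setext.
Qed.

Lemma mu0_ssa v I : semi_sigma_additive (mu0 v I : set (@CT d T I) -> \bar R).
Proof.
move=> F mF tF mU.
case: (pselect (continuous_sf v /\ InSigma I)) => [[cv HI]|nh]; last first.
  rewrite /mu0; case: pselect => // _.
  apply: cvg_near_cst; apply: nearW => n; exact: big1.
have /choice [r hr] : forall i, exists s, chain_rep I s /\ rep_set s = F i.
  by move=> i; apply: J0_rep => //; exact: mF.
have [s [hs hsU]] := J0_rep HI mU.
rewrite -hsU mu0E //.
rewrite (_ : (fun n => \sum_(0 <= i < n) mu0 v I (F i))%E =
   (fun n => (\sum_(0 <= i < n) rep_val v (r i))%:E)); last first.
  apply/funext => n; rewrite -sumEFin; apply: eq_bigr => i _.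
  by rewrite -(hr i).2 mu0E //; exact: (hr i).1.
apply: cvg_EFin; first exact: nearW.
apply: (cv.2 I HI r s) => //.
- by move=> k; exact: (hr k).1.
- by move=> i j _ _; rewrite !(hr _).2; exact: tF.
- by rewrite hsU; apply: eq_bigcupr => k _; exact: (hr k).2.
Qed.

End mu0.

Definition mu0c d (T : measurableType d) (R : realType) (v : set T -> R)
    (I : set (set T)) : set (@CT d T I) -> \bar R := mu0 v I.

HB.instance Definition _ d (T : measurableType d) (R : realType) v I :=
  isMeasure.Build d (@CT d T I) R (@mu0c d T R v I) (@mu0_0 d T R v I)
    (@mu0_ge0 d T R v I) (@mu0_ssa d T R v I).

Definition mT d (T : measurableType d) (R : realType) (v : set T -> R)
    (I : set (set T)) (A : set T) : \bar R :=
  if pselect (InSigma I) is left _ then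
    @measure_extension _ (@CT d T I) R (@mu0c d T R v I) A else 0%E.

Section mT.
Context {d : measure_display} {T : measurableType d} {R : realType}.
Implicit Types (I : set (set T)) (v : set T -> R) (s : seq (set T * set T)).

Lemma I_J0 I : InSigma I -> I `<=` J0 I.
Proof.
move=> HI C IC; right; exists C, set0; split => //; first exact: HI.2.1.
- exact: HI.2.2.1.
- by rewrite setD0.
Qed.

Lemma meas_sub I : InSigma I -> forall A : set T, measurable A ->
  <<s (J0 I) >> A.
Proof.
move=> HI A; rewrite -HI.2.2.2.2; apply: sub_sigma_algebra2; exact: I_J0.
Qed.

Lemma mT0 v I : mT v I set0 = 0%E.
Proof. by rewrite /mT; case: pselect => // _; exact: measure0. Qed.

Lemma mT_ge0 v I A : (0 <= mT v I A)%E.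
Proof. by rewrite /mT; case: pselect => // _; exact: measure_ge0. Qed.

Lemma mT_ssa v I : semi_sigma_additive (mT v I).
Proof.
move=> F mF tF mU; rewrite /mT; case: pselect => [HI|_]; last first.
  by apply: cvg_near_cst; apply: nearW => n; exact: big1.
apply: (@measure_semi_sigma_additive _ _ _
  (@measure_extension _ (@CT d T I) R (@mu0c d T R v I)) F) => //.
- by move=> i; apply: meas_sub => //; exact: mF.
- exact: meas_sub.
Qed.

End mT.

HB.instance Definition _ d (T : measurableType d) (R : realType) v I :=
  isMeasure.Build d T R (@mT d T R v I) (@mT0 d T R v I)
    (@mT_ge0 d T R v I) (@mT_ssa d T R v I).

Section ext.
Context {d : measure_display} {T : measurableType d} {R : realType}.
Implicit Types (I : set (set T)) (v : set T -> R) (s : seq (set T * set T)).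

Lemma mT_piece v I C D : continuous_sf v -> InSigma I -> I C -> I D -> D `<=` C ->
  mT v I (C `\` D) = (v C - v D)%:E.
Proof.
move=> cv HI IC ID DC; rewrite /mT; case: pselect => // _.
rewrite /measure_extension measurable_mu_extE; last first.
  by right; exists C, D; split => //; exact: HI.2.1.
rewrite /mu0c (_ : C `\` D = rep_set [:: (C, D)]); last by rewrite rep_set_cons /= setU0.
have := @mu0E d T R v I [:: (C, D)] cv HI; rewrite rep_val_cons rep_val_nil addr0; apply.
by split.
Qed.

Lemma mT_ext v I : continuous_sf v -> InSigma I -> is_mu_ext v I (mT v I).
Proof.
move=> cv HI; elim => [|[C D] s IH].
  by move=> _; rewrite rep_val_nil; exact: measure0.
move=> hs; have := hs; move=> [IC ID DC h hs'].
rewrite rep_set_cons rep_val_cons EFinD -(IH hs') -(mT_piece cv HI IC ID DC).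
apply: measureU.
- by apply: measurableD; exact: HI.1.
- exact: (rep_meas HI.1).
- apply/seteqP; split => // x [[_ nDx] /(rep_set_subD hs)]; exact: nDx.
Qed.

Lemma extension v I : continuous_sf v -> InSigma I ->
  exists m : {measure set T -> \bar R}, is_mu_ext v I m.
Proof. by move=> cv HI; exists (mT v I); exact: mT_ext. Qed.

End ext.
Section ins.
Context {d : measure_display} {T : measurableType d}.

Definition ins (A : set T) (I : set (set T)) : set (set T) :=
  [set X | exists B, I B /\ (X = B `&` A \/ X = A `|` B)].

Lemma ins_sigma (I : set (set T)) A : @InSigma d T I -> measurable A ->
  @InSigma d T (ins A I).
Proof.
move=> [Im [ch [I0 [IT gen]]]] mA; split; [|split; [|split; [|split]]].
- move=> X [B [IB [->|->]]]; first by apply: measurableI => //; exact: Im.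
  by apply: measurableU => //; exact: Im.
- move=> X Y [B1 [IB1 [->|->]]] [B2 [IB2 [->|->]]].
  + by case: (ch _ _ IB1 IB2) => s; [left|right]; apply: setSI.
  + by left => x [_ ?]; left.
  + by right => x [_ ?]; left.
  + by case: (ch _ _ IB1 IB2) => s; [left|right]; apply: setUS.
- by exists set0; split => //; left; rewrite set0I.
- by exists setT; split => //; right; rewrite setUT.
- apply/seteqP; split.
    apply: smallest_sub; first exact: sigma_algebra_measurable.
    move=> X [B [IB [->|->]]]; first by apply: measurableI => //; exact: Im.
    by apply: measurableU => //; exact: Im.
  rewrite -gen; apply: smallest_sub; first exact: smallest_sigma_algebra.
  move=> B IB.
  have sA : <<s ins A I >> A.
    by apply: sub_sigma_algebra; exists setT; split => //; left; rewrite setTI.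
  have sBA : <<s ins A I >> (B `&` A).
    by apply: sub_sigma_algebra; exists B; split => //; left.
  have sAB : <<s ins A I >> (A `|` B).
    by apply: sub_sigma_algebra; exists B; split => //; right.
  have -> : B = (B `&` A) `|` ((A `|` B) `\` A).
    apply/funext => x; apply/propext; have := pselect (A x).
    rewrite /setD /setI /setU /=; tauto.
  apply: (@measurableU _ (g_sigma_algebraType (ins A I))) => //.
  exact: (@measurableD _ (g_sigma_algebraType (ins A I))).
Qed.

Lemma ins_A I A : I setT -> ins A I A.
Proof. by move=> IT; exists setT; split => //; left; rewrite setTI. Qed.

Lemma ins_U I A B : I B -> ins A I (A `|` B).
Proof. by move=> IB; exists B; split => //; right. Qed.

End ins.

Lemma ler_cst_lim {R : realType} (u : nat -> R) l b :
  u @ \oo --> l -> (forall n, u n <= b) -> l <= b.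
Proof. move=> ul ub; apply: (ler_cvg_to ul (cvg_cst b)); exact: nearW. Qed.

Lemma ger_cst_lim {R : realType} (u : nat -> R) l b :
  u @ \oo --> l -> (forall n, b <= u n) -> b <= l.
Proof. move=> ul ub; apply: (ler_cvg_to (cvg_cst b) ul); exact: nearW. Qed.

Lemma mono_seq {R : realType} (u : nat -> R) b :
  (forall n, u n <= u n.+1) -> (forall n, u n <= b) ->
  cvgn u /\ (forall n, u n <= limn u) /\ limn u <= b.
Proof.
move=> inc ub.
have nd : nondecreasing_seq u by apply/nondecreasing_seqP.
have cu : cvgn u.
  apply: nondecreasing_is_cvgn => //; exists b => _ [n _ <-]; exact: ub.
split => //; split; first exact: nondecreasing_cvgn_le.
exact: (ler_cst_lim cu).
Qed.

Set Default Proof Using "All".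
Section main.
Context {d : measure_display} {T : measurableType d} {R : realType}.
Variables (v : nat -> set T -> R) (I0 : set (set T)).
Hypotheses (HI0 : InSigma I0) (vge0 : forall n A, measurable A -> 0 <= v n A)
  (v00 : v 0%N set0 = 0) (cont : forall n, continuous_sf (v n))
  (rec : forall n A, measurable A -> ((v n.+1 A)%:E = sup_mu (v n) A)%E).

Lemma ubm n A I (m : {measure set T -> \bar R}) : measurable A -> InSigma I ->
  is_mu_ext (v n) I m -> (m A <= (v n.+1 A)%:E)%E.
Proof.
move=> mA HI hm; rewrite rec //; apply: ereal_sup_ubound; by exists I, m; split.
Qed.

Lemma piece n I (m : {measure set T -> \bar R}) C D : is_mu_ext (v n) I m ->
  I C -> I D -> D `<=` C -> m (C `\` D) = (v n C - v n D)%:E.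
Proof.
move=> hm IC ID DC; have := hm [:: (C, D)].
rewrite rep_set_cons rep_val_cons rep_val_nil addr0 /= setU0; apply.
by split.
Qed.

Lemma v0 n : v n set0 = 0.
Proof.
elim: n => // n IH; apply/eqP; rewrite eq_le vge0 // andbT.
rewrite -lee_fin rec //; apply: ge_ereal_sup => x [I [m [HI hm ->]]].
by rewrite measure0.
Qed.

Lemma vT n : v n setT = v 0%N setT.
Proof.
elim: n => // n IH; rewrite -IH; apply/eqP; rewrite eq_le; apply/andP; split.
- rewrite -lee_fin rec //; apply: ge_ereal_sup => x [I [m [HI hm ->]]].
  rewrite -{1}(setD0 setT) (piece hm HI.2.2.2.1 HI.2.2.1 (@sub0set _ _)).
  by rewrite v0 subr0.
- have [m hm] := extension (cont n) HI0; rewrite -lee_fin.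
  have := piece hm HI0.2.2.2.1 HI0.2.2.1 (@sub0set _ setT).
  rewrite setD0 v0 subr0 => <-; exact: (ubm measurableT HI0 hm).
Qed.

Lemma vmono n A : measurable A -> v n A <= v n.+1 A.
Proof.
move=> mA; have HI := ins_sigma HI0 mA.
have [m hm] := extension (cont n) HI.
have := piece hm (ins_A A HI0.2.2.2.1) HI.2.2.1 (@sub0set _ A).
rewrite setD0 v0 subr0 => e; rewrite -lee_fin -e; exact: (ubm mA HI hm).
Qed.

Lemma vbound n A : measurable A -> v n A <= v 0%N setT.
Proof. move=> mA; rewrite -(vT n); apply: (cont n).1 => //. Qed.

Lemma vsub n A B : measurable A -> measurable B ->
  v n (A `|` B) + v n (A `&` B) <= v n.+1 A + v n.+1 B.
Proof.
move=> mA mB.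
have mAB : measurable (A `|` B) by exact: measurableU.
have mAiB : measurable (A `&` B) by exact: measurableI.
have HI1 := ins_sigma HI0 mAB.
have HI2 := ins_sigma HI1 mAiB.
have I2i : ins (A `&` B) (ins (A `|` B) I0) (A `&` B) by exact: (ins_A (A `&` B) HI1.2.2.2.1).
have I2u : ins (A `&` B) (ins (A `|` B) I0) (A `|` B).
  have := ins_U (A `&` B) (ins_A (A `|` B) HI0.2.2.2.1).
  have e : (A `&` B) `|` (A `|` B) = A `|` B by apply: setUidr => x [? _]; left.
  by rewrite e.
have [m hm] := extension (cont n) HI2.
have eU := piece hm I2u HI2.2.2.1 (@sub0set _ _).
have eI := piece hm I2i HI2.2.2.1 (@sub0set _ _).
rewrite setD0 v0 subr0 in eU; rewrite setD0 v0 subr0 in eI.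
rewrite -lee_fin EFinD -eU -eI.
have -> : (m (A `|` B) + m (A `&` B) = m A + m B)%E.
  rewrite (@measureDI _ _ _ m (A `|` B) A) // (@measureDI _ _ _ m B A) //.
  have -> : (A `|` B) `\` A = B `\` A.
    apply/funext => x; apply/propext; rewrite /setD /setU /=; tauto.
  have -> : (A `|` B) `&` A = A.
    apply/funext => x; apply/propext; rewrite /setI /setU /=; tauto.
  rewrite (setIC B A) [(m (B `\` A) + _)%E]addeC -addeA //.
by rewrite EFinD; apply: leeD; [exact: (ubm mA HI2 hm)|exact: (ubm mB HI2 hm)].
Qed.

Lemma vcont n (A : nat -> set T) : (forall k, measurable (A k)) ->
  (forall k, A k `<=` A k.+1) ->
  (fun k => v n.+1 (A k)) @ \oo --> v n.+1 (\bigcup_k A k).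
Proof.
move=> mA incA.
have mU : measurable (\bigcup_k A k) by exact: bigcupT_measurable.
have ndA : nondecreasing_seq A.
  by apply/nondecreasing_seqP => k; rewrite subsetEset; exact: incA.
have subU : forall k, A k `<=` \bigcup_k A k by move=> k x Ax; exists k.
have [cw [wle _]] := @mono_seq R (fun k => v n.+1 (A k)) (v n.+1 (\bigcup_k A k))
  (fun k => (cont n.+1).1 _ _ (mA k) (mA k.+1) (incA k))
  (fun k => (cont n.+1).1 _ _ (mA k) mU (subU k)).
suff <- : limn (fun k => v n.+1 (A k)) = v n.+1 (\bigcup_k A k) by exact: cw.
apply/eqP; rewrite eq_le; apply/andP; split.
  apply: (ler_cst_lim cw) => k; exact: ((cont n.+1).1 _ _ (mA k) mU (subU k)).
rewrite -lee_fin rec //; apply: ge_ereal_sup => x [I [m [HI hm ->]]].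
have := nondecreasing_cvg_mu (mu := m) mA mU ndA.
apply: cvge_le; apply: nearW => k /=.
apply: le_trans (ubm (mA k) HI hm) _; rewrite lee_fin; exact: wle.
Qed.

End main.

Unset Implicit Arguments.
Set Strict Implicit.

Theorem proposition20 (d : measure_display) (T : measurableType d) (R : realType)
    (v : nat -> set T -> R) :
  (exists I : set (set T), InSigma I) ->
  (forall n A, measurable A -> 0 <= v n A) ->
  v 0%N set0 = 0 ->
  (forall n, continuous_sf (v n)) ->
  (forall n A, measurable A -> ((v n.+1 A)%:E = sup_mu (v n) A)%E) ->
  (forall A, measurable A ->
     (forall n, v n A <= v n.+1 A) /\ (forall n, v n A <= v 0%N setT) /\
     cvg (v^~ A @ \oo)) /\
  (let vl := fun A => lim (v^~ A @ \oo) in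
   [/\ nondecreasing_sf vl, submodular_sf vl, vl set0 = 0,
       vl setT = v 0%N setT &
       forall A : nat -> set T, (forall n, measurable (A n)) ->
         (forall n, A n `<=` A n.+1) ->
         (vl \o A) @ \oo --> vl (\bigcup_n A n)]).
Proof.
move=> [I0 HI0] vge0 v00 cont rec.
have vm := vmono HI0 vge0 v00 cont rec.
have vb := vbound HI0 vge0 v00 cont rec.
have vs := vsub HI0 vge0 v00 cont rec.
have vc := vcont HI0 vge0 v00 cont rec.
have v0' := v0 HI0 vge0 v00 cont rec.
have vT' := vT HI0 vge0 v00 cont rec.
have seqA : forall A, measurable A -> cvgn (v^~ A) /\
    (forall n, v n A <= limn (v^~ A)) /\ limn (v^~ A) <= v 0%N setT.
  by move=> A mA; exact: (mono_seq (fun n => vm n A mA) (fun n => vb n A mA)).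
split.
  move=> A mA; split; first by move=> n; exact: vm.
  by split; [move=> n; exact: vb | exact: (seqA A mA).1].
move=> vl.
have ndvl : nondecreasing_sf vl.
  move=> A B mA mB AB; rewrite /vl; apply: ler_lim.
  - exact: (seqA A mA).1.
  - exact: (seqA B mB).1.
  - by apply: nearW => n; exact: (cont n).1.
split => //.
- move=> A B mA mB; rewrite /vl.
  have cU := (seqA _ (measurableU _ _ mA mB)).1.
  have cI := (seqA _ (measurableI _ _ mA mB)).1.
  have cA := (seqA _ mA).1.
  have cB := (seqA _ mB).1.
  have sA : (fun n => v n.+1 A) @ \oo --> limn (v^~ A).
    by rewrite (cvg_shiftS (fun n => v n A)).
  have sB : (fun n => v n.+1 B) @ \oo --> limn (v^~ B).
    by rewrite (cvg_shiftS (fun n => v n B)).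
  apply: (ler_cvg_to (cvgD cU cI) (cvgD sA sB)).
  by apply: nearW => n; exact: vs.
- rewrite /vl; apply: cvg_lim => //; apply: cvg_near_cst; apply: nearW => n.
  exact: v0'.
- rewrite /vl; apply: cvg_lim => //; apply: cvg_near_cst; apply: nearW => n.
  exact: vT'.
- move=> A mA incA.
  have mU : measurable (\bigcup_k A k) by exact: bigcupT_measurable.
  have subU : forall k, A k `<=` \bigcup_k A k by move=> k x Ax; exists k.
  have [cw [wle _]] := @mono_seq R (fun k => vl (A k)) (vl (\bigcup_k A k))
    (fun k => ndvl _ _ (mA k) (mA k.+1) (incA k))
    (fun k => ndvl _ _ (mA k) mU (subU k)).
  suff <- : limn (fun k => vl (A k)) = vl (\bigcup_k A k) by exact: cw.
  apply/eqP; rewrite eq_le; apply/andP; split.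
    by apply: (ler_cst_lim cw) => k; exact: (ndvl _ _ (mA k) mU (subU k)).
  apply: (ler_cst_lim (seqA _ mU).1) => n.
  apply: le_trans (vm n _ mU) _.
  apply: (ler_cst_lim (vc n A mA incA)) => k.
  apply: le_trans (wle k).
  exact: ((seqA (A k) (mA k)).2.1 n.+1).
Qed.
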